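(* Let $1\le d_1\le d_2$ and let $G=(V,E)$ be a finite connected undirected unweighted $(d_1,d_2)$-bidegreed graph. Then for every $\lambda\in[0,1]$ and every $S_0\subseteq V$, \[\mathrm{fp}^{\lambda,1}_G(S_0)=\frac{\sum_{v\in S_0}f(\deg_v)}{\sum_{v\in V}f(\deg_v)},\qquad f(d_1)=1,\quad f(d_2)=\frac{\lambda d_1+(1-\lambda)d_2}{\lambda d_2+(1-\lambda)d_1}.\]
   Context: A graph is $(d_1,d_2)$-bidegreed, $d_1\le d_2$, if every vertex has degree in $\{d_1,d_2\}$; $\deg_v$ is the degree of $v$. The $\lambda$-mixed Moran process on a connected graph $G=(V,E)$ with $n=|V|\ge 2$: each vertex hosts a resident (fitness $1$) or mutant (fitness $r>0$); the state is the mutant set $S_t\subseteq V$. Each step, independently: with probability $\lambda$ a Birth-death step (a vertex $u$ chosen with probability proportional to fitness among all vertices; a uniformly random neighbor of $u$ takes $u$'s type); with probability $1-\lambda$ a death-Birth step (a uniformly random vertex $v$ dies; a neighbor $u$ of $v$ chosen with probability proportional to fitness among the neighbors of $v$; $v$ takes $u$'s type). $\mathrm{fp}^{\lambda,r}_G(S_0)$ is the probability of reaching $S_t=V$ from $S_0$. *)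

(* Defs.v *)
From HB Require Import structures.
From mathcomp Require Import all_boot all_order all_algebra.
From mathcomp Require Import all_classical all_reals all_analysis.
Set Implicit Arguments. Unset Strict Implicit. Unset Printing Implicit Defensive.
Import Order.TTheory GRing.Theory Num.Theory numFieldNormedType.Exports.
Local Open Scope ring_scope.

Definition simple_graph (T : finType) (e : rel T) : Prop :=
  symmetric e /\ irreflexive e.

Definition graph_connected (T : finType) (e : rel T) : Prop :=
  forall x y : T, connect e x y.

Definition nbhd (T : finType) (e : rel T) (v : T) : {set T} := [set u | e v u].
Definition deg (T : finType) (e : rel T) (v : T) : nat := #|nbhd e v|.

Definition bidegreed (T : finType) (e : rel T) (d1 d2 : nat) : Prop :=
  (d1 <= d2)%N /\ forall v : T, deg e v = d1 \/ deg e v = d2.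

Section Moran.
Variables (R : realType) (T : finType) (e : rel T) (lam r : R).

(* fitness of vertex u in state S (S = mutant set) *)
Definition fit (S : {set T}) (u : T) : R := if u \in S then r else 1.

(* v takes u's type *)
Definition upd (S : {set T}) (u v : T) : {set T} :=
  if u \in S then v |: S else S :\ v.

Definition moran_step (S S' : {set T}) : R :=
  lam * (\sum_(u : T) \sum_(v in nbhd e u)
           (fit S u / (\sum_(w : T) fit S w)) * (deg e u)%:R^-1
           * (S' == upd S u v)%:R)
  + (1 - lam) * (\sum_(v : T) \sum_(u in nbhd e v)
           (#|T|%:R^-1) * (fit S u / (\sum_(w in nbhd e v) fit S w))
           * (S' == upd S u v)%:R).

Fixpoint moran_steps (t : nat) (S S' : {set T}) : R :=
  match t with
  | 0%N => (S == S')%:R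
  | t'.+1 => \sum_(S'' : {set T}) moran_steps t' S S'' * moran_step S'' S'
  end.

(* fixation probability: probability of reaching the absorbing state V;
   since V is absorbing this is lim_t P(S_t = V | S_0). *)
Definition fixation_prob (S0 : {set T}) : R :=
  limn (fun t => moran_steps t S0 [set: T]).

End Moran.

(* Main.v *)
Require Import Defs.
From HB Require Import structures.
From mathcomp Require Import all_boot all_order all_algebra.
From mathcomp Require Import all_classical all_reals all_analysis.
From mathcomp Require Import ring lra zify.
Import Order.TTheory GRing.Theory Num.Theory numFieldNormedType.Exports.
Local Open Scope ring_scope.

Section Aux.
Variables (R : realType) (T : finType) (e : rel T) (lam : R).

Lemma sum_ind_eq (g : {set T} -> R) X :
  \sum_(S' : {set T}) (S' == X)%:R * g S' = g X.
Proof.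
rewrite (bigD1 X) //= eqxx mul1r big1 ?addr0 // => S' /negbTE ->.
by rewrite mul0r.
Qed.

Let n := #|T|.

Lemma stepE S S' : moran_step e lam 1 S S' =
  lam * (\sum_(u : T) \sum_(v in nbhd e u)
     (n%:R^-1 * (deg e u)%:R^-1) * (S' == upd S u v)%:R)
  + (1 - lam) * (\sum_(v : T) \sum_(u in nbhd e v)
     (n%:R^-1 * (deg e v)%:R^-1) * (S' == upd S u v)%:R).
Proof.
rewrite /moran_step /fit.
have H1 : \sum_(w : T) (if w \in S then (1:R) else 1) = n%:R.
  by under eq_bigr do rewrite if_same; rewrite sumr_const.
have H2 : forall v, \sum_(w in nbhd e v) (if w \in S then (1:R) else 1) = (deg e v)%:R.
  by move=> v; under eq_bigr do rewrite if_same; rewrite sumr_const.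
rewrite H1; under eq_bigr do under eq_bigr do rewrite if_same mul1r.
congr (_ * _ + _ * _).
apply: eq_bigr => v _; apply: eq_bigr => u _.
by rewrite H2 if_same mul1r.
Qed.

Lemma PgE S (g : {set T} -> R) : \sum_(S' : {set T}) moran_step e lam 1 S S' * g S' =
  lam * (\sum_(u : T) \sum_(v in nbhd e u)
     (n%:R^-1 * (deg e u)%:R^-1) * g (upd S u v))
  + (1 - lam) * (\sum_(v : T) \sum_(u in nbhd e v)
     (n%:R^-1 * (deg e v)%:R^-1) * g (upd S u v)).
Proof.
under eq_bigr do rewrite stepE mulrDl.
rewrite big_split /=; congr (_ + _).
- under eq_bigr do rewrite -mulrA; rewrite -mulr_sumr; congr (_ * _).
  under [X in X = _]eq_bigr do rewrite mulr_suml; rewrite exchange_big; apply: eq_bigr => u _.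
  under [X in X = _]eq_bigr do rewrite mulr_suml; rewrite exchange_big; apply: eq_bigr => v _.
  rewrite (bigD1 (upd S u v)) //= eqxx mulr1 big1 ?addr0 // => i /negbTE ->.
  by rewrite mulr0 mul0r.
- under eq_bigr do rewrite -mulrA; rewrite -mulr_sumr; congr (_ * _).
  under [X in X = _]eq_bigr do rewrite mulr_suml; rewrite exchange_big; apply: eq_bigr => u _.
  under [X in X = _]eq_bigr do rewrite mulr_suml; rewrite exchange_big; apply: eq_bigr => v _.
  rewrite (bigD1 (upd S v u)) //= eqxx mulr1 big1 ?addr0 // => i /negbTE ->.
  by rewrite mulr0 mul0r.
Qed.

End Aux.

Lemma sum_ge_term (R : realType) (I : finType) (P : pred I) (F : I -> R) i :
  P i -> (forall j, P j -> 0 <= F j) -> F i <= \sum_(j | P j) F j.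
Proof.
move=> Pi F0; rewrite (bigD1 i) //= lerDl; apply: sumr_ge0 => j /andP[Pj _].
exact: F0.
Qed.

Lemma antisym_sum0 (R : realType) (I : finType) (H : I -> I -> R) :
  (forall u v, H v u = - H u v) -> \sum_u \sum_v H u v = 0.
Proof.
move=> HA.
have E1 : \sum_u \sum_v H u v = \sum_u \sum_v - H v u.
  by apply: eq_bigr => u _; apply: eq_bigr => v _; exact: HA.
have E2 : \sum_u \sum_v - H v u = - \sum_u \sum_v H u v.
  rewrite exchange_big /= -sumrN; apply: eq_bigr => v _.
  by rewrite -sumrN.
move: E2; rewrite -E1 => h; lra.
Qed.

Section Main.
Variables (R : realType) (T : finType) (e : rel T) (d1 d2 : nat) (lam : R).
Hypotheses (Hsg : simple_graph e) (Hcon : graph_connected e) (Hd1 : (1 <= d1)%N)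
  (Hbd : bidegreed e d1 d2) (Hlam : 0 <= lam <= 1) (HT : (0 < #|T|)%N).

Let f := fun d : nat =>
    if d == d1 then 1
    else (lam * d1%:R + (1 - lam) * d2%:R) / (lam * d2%:R + (1 - lam) * d1%:R).
Let F v := f (deg e v).
Let Phi (S : {set T}) := \sum_(v in S) F v.
Let P := moran_step e lam 1.

Lemma deg_pos v : (0 < deg e v)%N.
Proof. case: Hbd => le12 /(_ v) [] ->; lia. Qed.

Lemma deg_le v : (deg e v <= #|T|)%N.
Proof. exact: max_card. Qed.

Lemma d_gt0 : (0:R) < d1%:R /\ (0:R) < d2%:R /\ (d1%:R : R) <= d2%:R.
Proof.
case: Hbd => le12 _; rewrite !ltr0n ler_nat le12; split => //; split => //; lia.
Qed.

Lemma denom_gt0 : 0 < lam * d2%:R + (1 - lam) * d1%:R.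
Proof. have [h1 [h2 h3]] := d_gt0; case/andP: Hlam => l0 l1; nra. Qed.

Lemma numer_gt0 : 0 < lam * d1%:R + (1 - lam) * d2%:R.
Proof. have [h1 [h2 h3]] := d_gt0; case/andP: Hlam => l0 l1; nra. Qed.

Lemma f_gt0 d : 0 < f d.
Proof.
rewrite /f; case: ifP => _ //; apply: divr_gt0; [exact: numer_gt0|exact: denom_gt0].
Qed.

Lemma F_gt0 v : 0 < F v.
Proof. exact: f_gt0. Qed.

Lemma inner_const u : \sum_(v in nbhd e u) (#|T|%:R^-1 * (deg e u)%:R^-1) = #|T|%:R^-1 :> R.
Proof.
rewrite sumr_const -[#|nbhd e u|]/(deg e u) -(mulr_natr (#|T|%:R^-1 * (deg e u)%:R^-1)) -mulrA mulVf ?mulr1 //.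
by rewrite pnatr_eq0 -lt0n deg_pos.
Qed.

Lemma sum_n : \sum_(u : T) #|T|%:R^-1 = 1 :> R.
Proof. by rewrite sumr_const -(mulr_natr #|T|%:R^-1) mulVf // pnatr_eq0 -lt0n HT. Qed.

Lemma row_sum S : \sum_(S' : {set T}) P S S' = 1.
Proof.
have := PgE R T e lam S (fun _ => 1).
under eq_bigr do rewrite mulr1.
move=> ->.
under eq_bigr do under eq_bigr do rewrite mulr1.
under eq_bigr do rewrite inner_const.
by rewrite sum_n; ring.
Qed.

Lemma step_ge0 S S' : 0 <= P S S'.
Proof.
case/andP: Hlam => l0 l1.
rewrite /P stepE; apply: addr_ge0; apply: mulr_ge0; rewrite ?subr_ge0 //;
  apply: sumr_ge0 => u _; apply: sumr_ge0 => v _;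
  by rewrite !mulr_ge0 ?invr_ge0 ?ler0n.
Qed.

Lemma Phi_upd S u v :
  Phi (upd S u v) - Phi S = ((u \in S)%:R - (v \in S)%:R) * F v.
Proof.
rewrite /upd; case: (u \in S); case: (boolP (v \in S)) => hv /=.
- have -> : v |: S = S by apply/setP => w; rewrite !inE; case: eqP => // ->.
  by rewrite subrr subrr mul0r.
- by rewrite /Phi big_setU1 //= addrK subr0 mul1r.
- rewrite /Phi [X in _ - X](big_setD1 v) //=. ring.
- have -> : S :\ v = S.
    apply/setP => w; rewrite !inE; case: eqP => // ->; by rewrite (negbTE hv).
  by rewrite subrr subrr mul0r.
Qed.

Lemma Wsym u v :
  F v * (lam / (deg e u)%:R + (1 - lam) / (deg e v)%:R) =
  F u * (lam / (deg e v)%:R + (1 - lam) / (deg e u)%:R).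
Proof.
have [h1 [h2 h3]] := d_gt0.
have hd := denom_gt0.
rewrite /F /f; case: Hbd => _ Hd.
case: (Hd u) => ->; case: (Hd v) => ->; rewrite ?eqxx //;
  case: (d2 =P d1) => [->|ne] //=; field;
  by rewrite ?lt0r_neq0 ?denom_gt0 ?h1 ?h2.
Qed.

Lemma nb_mkcond (G : T -> T -> R) :
  \sum_u \sum_(v in nbhd e u) G u v = \sum_u \sum_v (if e u v then G u v else 0).
Proof.
apply: eq_bigr => u _; rewrite big_mkcond; apply: eq_bigr => v _.
by rewrite /nbhd inE.
Qed.

Lemma nb_swap (G : T -> T -> R) :
  \sum_v \sum_(u in nbhd e v) G u v = \sum_u \sum_v (if e u v then G u v else 0).
Proof.
rewrite (nb_mkcond (fun v u => G u v)) exchange_big /=.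
apply: eq_bigr => u _; apply: eq_bigr => v _.
by case: Hsg => sy _; rewrite sy.
Qed.

Lemma sum_split_const (g : {set T} -> R) c S :
  \sum_(S' : {set T}) P S S' * g S' =
  \sum_(S' : {set T}) P S S' * (g S' - c) + c.
Proof.
rewrite -[X in _ = _ + X]mul1r -(row_sum S) mulr_suml -big_split /=; apply: eq_bigr => S' _; ring.
Qed.

Lemma harmonic S : \sum_(S' : {set T}) P S S' * Phi S' = Phi S.
Proof.
rewrite (sum_split_const Phi (Phi S)).
suff -> : \sum_(S' : {set T}) P S S' * (Phi S' - Phi S) = 0 by rewrite add0r.
rewrite /P (PgE R T e lam S (fun S' => Phi S' - Phi S)).
under eq_bigr do under eq_bigr do rewrite Phi_upd.
under [X in _ + _ * X]eq_bigr do under eq_bigr do rewrite Phi_upd.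
rewrite nb_mkcond nb_swap.
rewrite !mulr_sumr -big_split /=.
under eq_bigr do rewrite !mulr_sumr -big_split /=.
pose H u v := if e u v then #|T|%:R^-1 * (((u \in S)%:R - (v \in S)%:R) *
   (F v * (lam / (deg e u)%:R + (1 - lam) / (deg e v)%:R))) else 0.
transitivity (\sum_u \sum_v H u v).
  apply: eq_bigr => u _; apply: eq_bigr => v _; rewrite /H.
  case: (e u v); last by rewrite !mulr0 addr0.
  rewrite /F; ring.
apply: antisym_sum0 => u v; rewrite /H.
case: Hsg => sy _; rewrite (sy v u); case: (e u v); last by rewrite oppr0.
rewrite (Wsym u v); ring.
Qed.

Definition qv S := \sum_(S' : {set T}) P S S' * (Phi S' - Phi S) ^+ 2.

Lemma sq_step S :
  \sum_(S' : {set T}) P S S' * Phi S' ^+ 2 = Phi S ^+ 2 + qv S.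
Proof.
have -> : qv S = \sum_(S' : {set T}) P S S' * Phi S' ^+ 2
   - 2 * Phi S * \sum_(S' : {set T}) P S S' * Phi S'
   + Phi S ^+ 2 * \sum_(S' : {set T}) P S S'.
  rewrite /qv [2 * Phi S * _]mulr_sumr [Phi S ^+ 2 * _]mulr_sumr -sumrB -big_split /=; apply: eq_bigr => S0 _; ring.
rewrite harmonic row_sum; ring.
Qed.

Lemma cross (S : {set T}) (x y : T) : x \in S -> y \notin S ->
  exists u v, [/\ u \in S, v \notin S & e u v].
Proof.
move=> hx hy; have /connectP [p pth ly] := Hcon x y.
elim: p x hx pth ly => [|z p IH] x hx /= pth ly.
  by move: hy; rewrite ly hx.
case/andP: pth => exz pth; case: (boolP (z \in S)) => hz.
  exact: (IH z hz pth ly).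
by exists x, z.
Qed.

Let mF := Num.min (f d1) (f d2).

Lemma mF_gt0 : 0 < mF.
Proof. by rewrite /mF lt_min !f_gt0. Qed.

Lemma F_ge_mF v : mF <= F v.
Proof.
rewrite /mF /F ge_min; case: Hbd => _ /(_ v) [] ->; by rewrite lexx ?orbT.
Qed.

Lemma inv_deg u : #|T|%:R^-1 <= (deg e u)%:R^-1 :> R.
Proof.
by rewrite lef_pV2 ?posrE ?ltr0n ?deg_pos ?HT // ler_nat deg_le.
Qed.

Lemma step_lb (S : {set T}) (u v : T) : u \in S -> e u v ->
  #|T|%:R^-1 * #|T|%:R^-1 <= P S (upd S u v).
Proof.
move=> hu euv.
have evu : e v u by case: Hsg => sy _; rewrite sy.
case/andP: Hlam => l0 l1.
have n0 : 0 <= #|T|%:R^-1 :> R by rewrite invr_ge0 ler0n.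
have A : #|T|%:R^-1 * #|T|%:R^-1 <= \sum_(u0 : T) \sum_(v0 in nbhd e u0)
     (#|T|%:R^-1 * (deg e u0)%:R^-1) * (upd S u v == upd S u0 v0)%:R :> R.
  apply: le_trans (@sum_ge_term R T xpredT _ u _ _) => //; last first.
    move=> j _; apply: sumr_ge0 => k _; by rewrite !mulr_ge0 ?invr_ge0 ?ler0n.
  apply: le_trans (@sum_ge_term R T (fun k => k \in nbhd e u) _ v _ _) => //.
  - by rewrite eqxx mulr1 ler_wpM2l // inv_deg.
  - by rewrite /nbhd inE.
have B : #|T|%:R^-1 * #|T|%:R^-1 <= \sum_(v0 : T) \sum_(u0 in nbhd e v0)
     (#|T|%:R^-1 * (deg e v0)%:R^-1) * (upd S u v == upd S u0 v0)%:R :> R.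
  apply: le_trans (@sum_ge_term R T xpredT _ v _ _) => //; last first.
    move=> j _; apply: sumr_ge0 => k _; by rewrite !mulr_ge0 ?invr_ge0 ?ler0n.
  apply: le_trans (@sum_ge_term R T (fun k => k \in nbhd e v) _ u _ _) => //.
  - by rewrite eqxx mulr1 ler_wpM2l // inv_deg.
  - by rewrite /nbhd inE.
rewrite /P stepE; nra.
Qed.

Lemma qv_lb (S : {set T}) : S != finset.set0 -> S != [set: T] ->
  #|T|%:R^-1 * #|T|%:R^-1 * mF ^+ 2 <= qv S.
Proof.
move=> /set0Pn [x hx]; rewrite -properT => /properP [_ [y _ hy]].
have [u [v [hu hv euv]]] := cross _ _ _ hx hy.
apply: le_trans (@sum_ge_term R {set T} xpredT _ (upd S u v) _ _) => //; last first.
  by move=> j _; rewrite mulr_ge0 ?step_ge0 ?sqr_ge0.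
rewrite Phi_upd hu (negbTE hv) /= subr0 mul1r.
have h1 := step_lb S u v hu euv.
have h2 := F_ge_mF v.
have h3 := mF_gt0.
have h4 : 0 <= #|T|%:R^-1 * #|T|%:R^-1 :> R by rewrite mulr_ge0 ?invr_ge0 ?ler0n.
apply: le_trans (_ : #|T|%:R^-1 * #|T|%:R^-1 * F v ^+ 2 <= _).
  rewrite ler_wpM2l // !expr2; nra.
by rewrite ler_wpM2r ?sqr_ge0.
Qed.

Variable S0 : {set T}.

Let pt t S := moran_steps e lam 1 t S0 S.

Lemma pt_ge0 t S : 0 <= pt t S.
Proof.
elim: t S => [|t IH] S /=; first by rewrite ler0n.
by apply: sumr_ge0 => S'' _; rewrite mulr_ge0 ?step_ge0 ?IH.
Qed.

Lemma E_step t (g : {set T} -> R) :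
  \sum_(S' : {set T}) pt t.+1 S' * g S' =
  \sum_(S : {set T}) pt t S * (\sum_(S' : {set T}) P S S' * g S').
Proof.
rewrite /pt /=.
under eq_bigr do rewrite mulr_suml.
rewrite exchange_big /=; apply: eq_bigr => S _.
rewrite mulr_sumr; apply: eq_bigr => S' _; by rewrite mulrA.
Qed.

Lemma pt_sum t : \sum_(S : {set T}) pt t S = 1.
Proof.
elim: t => [|t IH].
  rewrite /pt /= (bigD1 S0) //= eqxx big1 ?addr0 // => S /negbTE.
  by rewrite eq_sym => ->.
have := E_step t (fun _ => 1).
under eq_bigr do rewrite mulr1.
move=> ->.
under eq_bigr do under eq_bigr do rewrite mulr1.
by under eq_bigr do rewrite row_sum mulr1.
Qed.

Lemma E_Phi t : \sum_(S : {set T}) pt t S * Phi S = Phi S0.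
Proof.
elim: t => [|t IH].
  rewrite /pt /= (bigD1 S0) //= eqxx mul1r big1 ?addr0 // => S /negbTE.
  by rewrite eq_sym => ->; rewrite mul0r.
by rewrite E_step; under eq_bigr do rewrite harmonic.
Qed.

Lemma E_Phi2 t : \sum_(S : {set T}) pt t.+1 S * Phi S ^+ 2 =
  \sum_(S : {set T}) pt t S * Phi S ^+ 2 + \sum_(S : {set T}) pt t S * qv S.
Proof.
rewrite E_step -big_split /=; apply: eq_bigr => S _.
by rewrite sq_step mulrDr.
Qed.

Let Z := Phi [set: T].

Lemma Phi_ge0 S : 0 <= Phi S.
Proof. by apply: sumr_ge0 => v _; rewrite ltW ?F_gt0. Qed.

Lemma Phi_leZ S : Phi S <= Z.
Proof.
rewrite /Z /Phi [leRHS](big_setID S) /= finset.setTI lerDl.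
by apply: sumr_ge0 => v _; rewrite ltW ?F_gt0.
Qed.

Lemma Z_gt0 : 0 < Z.
Proof.
have [x _] : exists x : T, true.
  by have /card_gt0P [x _] := HT; exists x.
rewrite /Z /Phi (big_setD1 x) ?inE //= ltr_pwDl ?F_gt0 //.
by apply: sumr_ge0 => v _; rewrite ltW ?F_gt0.
Qed.

Lemma E_Phi2_le t : \sum_(S : {set T}) pt t S * Phi S ^+ 2 <= Z ^+ 2.
Proof.
rewrite -[leRHS]mul1r -(pt_sum t) mulr_suml; apply: ler_sum => S _.
apply: ler_wpM2l; first exact: pt_ge0.
have := Phi_ge0 S; have := Phi_leZ S; rewrite !expr2; nra.
Qed.

Definition mt t := \sum_(S | (S != finset.set0) && (S != [set: T])) pt t S.

Lemma mt_ge0 t : 0 <= mt t.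
Proof. by apply: sumr_ge0 => S _; exact: pt_ge0. Qed.

Let c0 := #|T|%:R^-1 * #|T|%:R^-1 * mF ^+ 2.

Lemma c0_gt0 : 0 < c0.
Proof.
by rewrite /c0 !mulr_gt0 ?invr_gt0 ?ltr0n ?exprn_gt0 ?mF_gt0.
Qed.

Lemma E_qv_ge t : c0 * mt t <= \sum_(S : {set T}) pt t S * qv S.
Proof.
rewrite /mt mulr_sumr [leRHS](bigID (fun S => (S != finset.set0) && (S != [set: T]))) /=.
rewrite -[leLHS]addr0; apply: lerD.
  apply: ler_sum => S /andP [h1 h2]; rewrite mulrC ler_wpM2l ?pt_ge0 //.
  exact: qv_lb.
apply: sumr_ge0 => S _; rewrite mulr_ge0 ?pt_ge0 //.
by apply: sumr_ge0 => S' _; rewrite mulr_ge0 ?step_ge0 ?sqr_ge0.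
Qed.

Lemma series_bound t : c0 * \sum_(0 <= k < t) mt k <= Z ^+ 2.
Proof.
apply: le_trans (E_Phi2_le t).
elim: t => [|t IH].
  rewrite big_geq // mulr0; apply: sumr_ge0 => S _.
  by rewrite mulr_ge0 ?pt_ge0 ?sqr_ge0.
rewrite big_nat_recr //= mulrDr E_Phi2; apply: lerD => //.
exact: E_qv_ge.
Qed.

Lemma split3 (g : {set T} -> R) : \sum_(S : {set T}) g S =
  g [set: T] + g finset.set0 +
  \sum_(S | (S != finset.set0) && (S != [set: T])) g S.
Proof.
have hT : [set: T] != finset.set0.
  by rewrite -card_gt0 cardsT.
rewrite (bigD1 [set: T]) //= (bigD1 finset.set0) /=; last by rewrite eq_sym.
rewrite addrA; congr (_ + _); apply: eq_bigl => S.
by rewrite andbC.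
Qed.

Lemma key t : - mt t <= pt t [set: T] - Phi S0 / Z <= mt t.
Proof.
have := E_Phi t; rewrite split3.
have -> : Phi finset.set0 = 0 by rewrite /Phi big_set0.
rewrite mulr0 addr0 => E.
set W := \sum_(S | _) _ in E.
have W0 : 0 <= W by apply: sumr_ge0 => S _; rewrite mulr_ge0 ?pt_ge0 ?Phi_ge0.
have WZ : W <= Z * mt t.
  rewrite /W /mt mulr_sumr; apply: ler_sum => S _.
  by rewrite [Z * _]mulrC ler_wpM2l ?pt_ge0 ?Phi_leZ.
have hZ := Z_gt0.
have -> : Phi S0 / Z = pt t [set: T] + W / Z.
  by rewrite -E mulrDl mulfK // gt_eqF.
have hm := mt_ge0 t.
have : W / Z <= mt t by rewrite ler_pdivrMr // mulrC.
have : 0 <= W / Z by rewrite divr_ge0 // ltW.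
move=> h1 h2; apply/andP; split; lra.
Qed.

Local Open Scope classical_set_scope.

Lemma mt_cvg0 : mt @ \oo --> 0.
Proof.
apply: cvg_series_cvg_0; apply: nondecreasing_is_cvgn.
  apply/nondecreasing_seqP => k; rewrite /series /= big_nat_recr //= lerDl.
  exact: mt_ge0.
exists (Z ^+ 2 / c0) => _ [k _ <-].
rewrite ler_pdivlMr ?c0_gt0 // mulrC; exact: series_bound.
Qed.

Lemma pt_T_cvg : (fun t => pt t [set: T]%SET) @ \oo --> ((Phi S0 / Z)%R : R).
Proof.
have h1 : (fun t => - mt t) @ \oo --> 0.
  by rewrite -oppr0; apply: cvgN mt_cvg0.
have h2 : (fun t => pt t [set: T]%SET - (Phi S0 / Z)%R) @ \oo --> 0.
  apply: (squeeze_cvgr _ h1 mt_cvg0); apply: filterE => t; exact: key.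
have -> : (fun t => pt t [set: T]%SET) = (fun t => (pt t [set: T]%SET - (Phi S0 / Z)%R) + (Phi S0 / Z)%R).
  by apply: funext => t; rewrite subrK.
rewrite -[X in _ --> X]add0r; apply: cvgD h2 (cvg_cst _).
Qed.

End Main.


Theorem mainTheorem10 (R : realType) (T : finType) (e : rel T) (d1 d2 : nat)
  (lam : R) (S0 : {set T}) :
  simple_graph e -> graph_connected e -> (1 <= d1)%N -> bidegreed e d1 d2 ->
  0 <= lam <= 1 ->
  let f := fun d : nat =>
    if d == d1 then 1
    else (lam * d1%:R + (1 - lam) * d2%:R) / (lam * d2%:R + (1 - lam) * d1%:R) in
  fixation_prob e lam 1 S0 =
    (\sum_(v in S0) f (deg e v)) / (\sum_(v : T) f (deg e v)).
Proof.
move=> Hsg Hcon Hd1 Hbd Hlam f.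
case: (posnP #|T|) => [T0 | HT].
  have nov (v : T) : False by have := card0_eq T0 v; rewrite !inE.
  rewrite [X in _ = X / _]big1; last by move=> v; case: (nov v).
  rewrite mul0r /fixation_prob; apply: cvg_lim => //.
  rewrite -cvg_shiftS.
  have -> : [sequence moran_steps e lam 1 n.+1 S0 [set: T]%SET]_n = fun _ => 0.
    apply: funext => n /=; apply: big1 => S _.
    rewrite /moran_step !big1 ?mulr0 ?addr0 ?mulr0 // => v; case: (nov v).
  exact: cvg_cst.
have -> : \sum_(v : T) f (deg e v) = \sum_(v in [set: T]%SET) f (deg e v).
  by apply: eq_bigl => v; rewrite inE.
rewrite /fixation_prob; apply: cvg_lim => //.
exact: (@pt_T_cvg R T e d1 d2 lam Hsg Hcon Hd1 Hbd Hlam HT S0).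
Qed.
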